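(* Let $n\ge 1$, $r\ge 1$, and $A,B\in U(2^n)$. If the $(n+1)$-qubit unitary $$D=\ket{0}\!\bra{0}\otimes A+\ket{1}\!\bra{1}\otimes B$$ lies in $\mathcal{C}_r^{(n+1)}$, then both $A$ and $B$ lie in $\mathcal{C}_r^{(n)}$.
   Context: The $n$-qubit Pauli group is $\mathcal{P}_n=\{\omega P_1\otimes\cdots\otimes P_n:\ \omega\in\{\pm1,\pm \mathrm{i}\},\ P_j\in\{I,X,Y,Z\}\}$. The $n$-qubit Clifford hierarchy is defined recursively by $\mathcal{C}_1^{(n)}:=\mathcal{P}_n$ and $\mathcal{C}_{k+1}^{(n)}:=\{U\in U(2^n):\ UPU^\dagger\in\mathcal{C}_k^{(n)}\text{ for all }P\in\mathcal{P}_n\}$. In $D$, the first tensor factor is a single qubit (the ''control'') and the second is the $n$-qubit register. *)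

(* Defs.v *)
(* Scalars: an arbitrary numeric algebraically closed field C
   with conjugation (e.g. the complex numbers). *)
From HB Require Import structures.
From mathcomp Require Import all_boot all_order all_algebra.
From mathcomp Require Export mxtens.
Set Implicit Arguments. Unset Strict Implicit. Unset Printing Implicit Defensive.
Import Order.TTheory GRing.Theory Num.Theory.
Local Open Scope ring_scope.

Section Qubits.
Variable C : numClosedFieldType.

Definition adjmx m n (A : 'M[C]_(m, n)) : 'M[C]_(n, m) := map_mx Num.conj A^T.

Definition unitary d (U : 'M[C]_d) : Prop := U *m adjmx U = 1%:M.

(* the single-qubit Pauli matrices I, X, Y, Z indexed by 'I_4 *)
Definition pauli1 (a : 'I_4) : 'M[C]_2 :=
  \matrix_(i < 2, j < 2)
    match nat_of_ord a with
    | 0 => if i == j then 1 else 0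
    | 1 => if i == j then 0 else 1
    | 2 => if i == j then 0 else (if i == 0 :> nat then - 'i else 'i)
    | _ => if i == j then (if i == 0 :> nat then 1 else -1) else 0
    end.

Definition qcast n : (2 * 2 ^ n = 2 ^ n.+1)%N := esym (expnS 2 n).

(* two-qubit-register tensor product: first factor is the first qubit *)
Definition qtens n (A : 'M[C]_2) (B : 'M[C]_(2 ^ n)) : 'M[C]_(2 ^ n.+1) :=
  castmx (qcast n, qcast n) (A *t B).

Fixpoint pauli_string (n : nat) : 'M[C]_(2 ^ n) -> Prop :=
  match n with
  | 0 => fun M => M = 1%:M
  | n'.+1 => fun M => exists (a : 'I_4) (M' : 'M[C]_(2 ^ n')),
                pauli_string M' /\ M = qtens (pauli1 a) M'
  end.

Definition pauli_group n (M : 'M[C]_(2 ^ n)) : Prop :=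
  exists (k : 'I_4) (P : 'M[C]_(2 ^ n)), pauli_string P /\ M = ('i ^+ k) *: P.

(* Clifford hierarchy: clifford n k U  <->  U \in C_k^(n)  (k >= 1);
   C_0 is not defined in the paper and is taken empty here. *)
Fixpoint clifford (n k : nat) (U : 'M[C]_(2 ^ n)) : Prop :=
  match k with
  | 0 => False
  | k'.+1 =>
      match k' with
      | 0 => pauli_group U
      | _ => unitary U /\
             forall P : 'M[C]_(2 ^ n), pauli_group P ->
               clifford k' (U *m P *m adjmx U)
      end
  end.

Definition proj0 : 'M[C]_2 := \matrix_(i < 2, j < 2) (if (i == 0 :> nat) && (j == 0 :> nat) then 1 else 0).
Definition proj1 : 'M[C]_2 := \matrix_(i < 2, j < 2) (if (i == 1 :> nat) && (j == 1 :> nat) then 1 else 0).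

Definition controlled n (A B : 'M[C]_(2 ^ n)) : 'M[C]_(2 ^ n.+1) :=
  qtens proj0 A + qtens proj1 B.

End Qubits.

(* Main.v *)
Require Import Defs.
From mathcomp Require Import all_boot all_order all_algebra.
From mathcomp Require Import mxtens.
Set Implicit Arguments. Unset Strict Implicit. Unset Printing Implicit Defensive.
Import Order.TTheory GRing.Theory Num.Theory.
Local Open Scope ring_scope.

Lemma castmxM_sq {C : numClosedFieldType} a b (e : a = b) (X Y : 'M[C]_a) :
  castmx (e, e) X *m castmx (e, e) Y = castmx (e, e) (X *m Y).
Proof. by case: b / e; rewrite !castmx_id. Qed.
Lemma castmxD_sq {C : numClosedFieldType} a b (e : a = b) (X Y : 'M[C]_a) :
  castmx (e, e) X + castmx (e, e) Y = castmx (e, e) (X + Y).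
Proof. by case: b / e; rewrite !castmx_id. Qed.
Lemma castmxZ_sq {C : numClosedFieldType} a b (e : a = b) c (X : 'M[C]_a) :
  c *: castmx (e, e) X = castmx (e, e) (c *: X).
Proof. by case: b / e; rewrite !castmx_id. Qed.
Lemma castmx1_sq {C : numClosedFieldType} a b (e : a = b) :
  castmx (e, e) (1%:M : 'M[C]_a) = 1%:M.
Proof. by case: b / e; rewrite !castmx_id. Qed.
Lemma castmx0_sq {C : numClosedFieldType} a b (e : a = b) :
  castmx (e, e) (0 : 'M[C]_a) = 0.
Proof. by case: b / e; rewrite !castmx_id. Qed.
Lemma adjmx_cast {C : numClosedFieldType} a b (e : a = b) (X : 'M[C]_a) :
  adjmx (castmx (e, e) X) = castmx (e, e) (adjmx X).
Proof. by case: b / e; rewrite !castmx_id. Qed.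
Lemma castmx_sq_inj {C : numClosedFieldType} a b (e : a = b) (X Y : 'M[C]_a) :
  castmx (e, e) X = castmx (e, e) Y -> X = Y.
Proof. by case: b / e; rewrite !castmx_id. Qed.

Lemma adjmxM {C : numClosedFieldType} m n p (X : 'M[C]_(m,n)) (Y : 'M[C]_(n,p)) :
  adjmx (X *m Y) = adjmx Y *m adjmx X.
Proof. by rewrite /adjmx trmx_mul map_mxM. Qed.
Lemma adjmxD {C : numClosedFieldType} m n (X Y : 'M[C]_(m,n)) :
  adjmx (X + Y) = adjmx X + adjmx Y.
Proof. by rewrite /adjmx linearD /= map_mxD. Qed.
Lemma adjmxT {C : numClosedFieldType} m n p q (X : 'M[C]_(m,n)) (Y : 'M[C]_(p,q)) :
  adjmx (X *t Y) = adjmx X *t adjmx Y.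
Proof. by rewrite /adjmx trmx_tens map_mxT. Qed.

Lemma tensmxDl {R : comPzRingType} m n p q (X X' : 'M[R]_(m,n)) (Y : 'M[R]_(p,q)) :
  (X + X') *t Y = X *t Y + X' *t Y.
Proof. by apply/matrixP=> i j; rewrite !mxE mulrDl. Qed.
Lemma tensmxZr {R : comPzRingType} m n p q (X : 'M[R]_(m,n)) c (Y : 'M[R]_(p,q)) :
  X *t (c *: Y) = c *: (X *t Y).
Proof. by apply/matrixP=> i j; rewrite !mxE mulrCA. Qed.
Lemma tensmx11 {R : comPzRingType} m n :
  (1%:M : 'M[R]_m) *t (1%:M : 'M[R]_n) = 1%:M.
Proof.
apply/matrixP=> i j.
case: (mxtens_indexP i)=> i0 i1; case: (mxtens_indexP j)=> j0 j1.
rewrite tensmxE !mxE (inj_eq (can_inj (@mxtens_indexK m n))) xpair_eqE.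
by case: (i0 == j0); case: (i1 == j1); rewrite ?mulr1 ?mulr0 ?mul0r.
Qed.

Ltac ord2 i := case: i => [[|[|?]] ?] //=.

Lemma proj00 {C : numClosedFieldType} : proj0 C *m proj0 C = proj0 C :> 'M[C]_2.
Proof. apply/matrixP=> i j; rewrite !mxE big_ord_recl big_ord1 !mxE; ord2 i; ord2 j; by rewrite ?mulr0 ?mul0r ?mulr1 ?addr0. Qed.
Lemma proj11 {C : numClosedFieldType} : proj1 C *m proj1 C = proj1 C :> 'M[C]_2.
Proof. apply/matrixP=> i j; rewrite !mxE big_ord_recl big_ord1 !mxE; ord2 i; ord2 j; by rewrite ?mulr0 ?mul0r ?mulr1 ?addr0 ?add0r. Qed.
Lemma proj01 {C : numClosedFieldType} : proj0 C *m proj1 C = 0 :> 'M[C]_2.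
Proof. apply/matrixP=> i j; rewrite !mxE big_ord_recl big_ord1 !mxE; ord2 i; ord2 j; by rewrite ?mulr0 ?mul0r ?mulr1 ?addr0 ?add0r. Qed.
Lemma proj10 {C : numClosedFieldType} : proj1 C *m proj0 C = 0 :> 'M[C]_2.
Proof. apply/matrixP=> i j; rewrite !mxE big_ord_recl big_ord1 !mxE; ord2 i; ord2 j; by rewrite ?mulr0 ?mul0r ?mulr1 ?addr0 ?add0r. Qed.
Lemma proj_sum {C : numClosedFieldType} : proj0 C + proj1 C = 1%:M :> 'M[C]_2.
Proof. apply/matrixP=> i j; rewrite !mxE; ord2 i; ord2 j; by rewrite ?addr0 ?add0r. Qed.
Lemma adj_proj0 {C : numClosedFieldType} : adjmx (proj0 C) = proj0 C :> 'M[C]_2.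
Proof. apply/matrixP=> i j; rewrite !mxE; ord2 i; ord2 j; by rewrite ?conjC0 ?conjC1. Qed.
Lemma adj_proj1 {C : numClosedFieldType} : adjmx (proj1 C) = proj1 C :> 'M[C]_2.
Proof. apply/matrixP=> i j; rewrite !mxE; ord2 i; ord2 j; by rewrite ?conjC0 ?conjC1. Qed.

Lemma qtens_mul {C : numClosedFieldType} n (X X' : 'M[C]_2) (Y Y' : 'M[C]_(2^n)) :
  qtens X Y *m qtens X' Y' = qtens (X *m X') (Y *m Y').
Proof. by rewrite /qtens castmxM_sq tensmx_mul. Qed.
Lemma qtens0 {C : numClosedFieldType} n (Y : 'M[C]_(2^n)) : qtens 0 Y = 0.
Proof. by rewrite /qtens tens0mx castmx0_sq. Qed.
Lemma qtensDl {C : numClosedFieldType} n (X X' : 'M[C]_2) (Y : 'M[C]_(2^n)) :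
  qtens (X + X') Y = qtens X Y + qtens X' Y.
Proof. by rewrite /qtens tensmxDl castmxD_sq. Qed.
Lemma qtensZr {C : numClosedFieldType} n (X : 'M[C]_2) c (Y : 'M[C]_(2^n)) :
  qtens X (c *: Y) = c *: qtens X Y.
Proof. by rewrite /qtens tensmxZr castmxZ_sq. Qed.
Lemma adj_qtens {C : numClosedFieldType} n (X : 'M[C]_2) (Y : 'M[C]_(2^n)) :
  adjmx (qtens X Y) = qtens (adjmx X) (adjmx Y).
Proof. by rewrite /qtens adjmx_cast adjmxT. Qed.

Lemma controlled_mul {C : numClosedFieldType} n (A B A' B' : 'M[C]_(2^n)) :
  controlled A B *m controlled A' B' = controlled (A *m A') (B *m B').
Proof.
rewrite /controlled mulmxDl !mulmxDr !qtens_mul proj00 proj11 proj01 proj10 !qtens0.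
by rewrite addr0 add0r.
Qed.
Lemma adj_controlled {C : numClosedFieldType} n (A B : 'M[C]_(2^n)) :
  adjmx (controlled A B) = controlled (adjmx A) (adjmx B).
Proof. by rewrite /controlled adjmxD !adj_qtens adj_proj0 adj_proj1. Qed.
Lemma qtens1 {C : numClosedFieldType} n (P : 'M[C]_(2^n)) :
  qtens 1%:M P = controlled P P.
Proof. by rewrite -proj_sum qtensDl. Qed.
Lemma controlled11 {C : numClosedFieldType} n :
  controlled (1%:M : 'M[C]_(2^n)) 1%:M = 1%:M.
Proof. by rewrite -qtens1 /qtens tensmx11 castmx1_sq. Qed.

Lemma controlled_inj {C : numClosedFieldType} n (A B A' B' : 'M[C]_(2^n)) :
  controlled A B = controlled A' B' -> A = A' /\ B = B'.
Proof.
rewrite /controlled /qtens !castmxD_sq => /castmx_sq_inj E.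
split; apply/matrixP=> i j.
- have := congr1 (fun M : 'M[C]_(2 * 2^n) => M (mxtens_index (Ordinal (isT : (0 < 2)%N), i)) (mxtens_index (Ordinal (isT : (0 < 2)%N), j))) E.
  by rewrite /= !mxE !mxtens_indexK /= !mul1r !mul0r !addr0.
- have := congr1 (fun M : 'M[C]_(2 * 2^n) => M (mxtens_index (Ordinal (isT : (1 < 2)%N), i)) (mxtens_index (Ordinal (isT : (1 < 2)%N), j))) E.
  by rewrite /= !mxE !mxtens_indexK /= !mul1r !mul0r !add0r.
Qed.

Definition o0 : 'I_2 := Ordinal (isT : (0 < 2)%N).
Definition o1 : 'I_2 := Ordinal (isT : (1 < 2)%N).

Lemma pauli1_nz {C : numClosedFieldType} (a : 'I_4) :
  exists x y, pauli1 C a x y != 0.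
Proof.
case: a => [[|[|[|[|a]]]] Ha] //.
- by exists o0, o0; rewrite mxE /= oner_eq0.
- by exists o0, o1; rewrite mxE /= oner_eq0.
- by exists o0, o1; rewrite mxE /= oppr_eq0 neq0Ci.
- by exists o0, o0; rewrite mxE /= oner_eq0.
Qed.

Lemma qtensE {C : numClosedFieldType} n (X : 'M[C]_2) (Y : 'M[C]_(2^n)) x y i j :
  qtens X Y (cast_ord (qcast n) (mxtens_index (x, i)))
            (cast_ord (qcast n) (mxtens_index (y, j))) = X x y * Y i j.
Proof. by rewrite /qtens castmxE !cast_ordK tensmxE. Qed.

Lemma pauli_string_nz {C : numClosedFieldType} n (S : 'M[C]_(2^n)) :
  pauli_string S -> exists i j, S i j != 0.
Proof.
elim: n S => [|n IH] S /=.
- move=> ->; exists (Ordinal (isT : (0 < 2^0)%N)), (Ordinal (isT : (0 < 2^0)%N)).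
  by rewrite mxE eqxx oner_eq0.
- move=> [a [S' [HS' ->]]].
  have [i [j Hij]] := IH _ HS'.
  have [x [y Hxy]] := @pauli1_nz C a.
  exists (cast_ord (qcast n) (mxtens_index (x, i))), (cast_ord (qcast n) (mxtens_index (y, j))).
  by rewrite qtensE mulf_neq0.
Qed.

Lemma iexp_mod {C : numClosedFieldType} m : 'i ^+ (m %% 4) = 'i ^+ m :> C.
Proof.
rewrite {2}(divn_eq m 4) exprD mulnC exprM.
have -> : 'i ^+ 4 = 1 :> C by rewrite (_ : 4 = 2 * 2)%N // exprM sqrCi sqrrN expr1n.
by rewrite expr1n mul1r.
Qed.

Lemma base_pauli {C : numClosedFieldType} n (A B : 'M[C]_(2^n)) :
  pauli_group (controlled A B) -> pauli_group A /\ pauli_group B.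
Proof.
move=> [k [S [HS E]]].
case: HS => a [S' [HS' ES]]; subst S.
have F : forall x y i j, proj0 C x y * A i j + proj1 C x y * B i j
                       = 'i ^+ k * (pauli1 C a x y * S' i j).
  move=> x y i j.
  have := congr1 (fun M : 'M[C]_(2^n.+1) => M (cast_ord (qcast n) (mxtens_index (x, i)))
            (cast_ord (qcast n) (mxtens_index (y, j)))) E.
  by rewrite /= /controlled [X in X = _ -> _]mxE [X in _ = X -> _]mxE !qtensE.
have FA : forall i j, A i j = 'i ^+ k * (pauli1 C a o0 o0 * S' i j).
  by move=> i j; rewrite -F !mxE /= mul1r mul0r addr0.
have FB : forall i j, B i j = 'i ^+ k * (pauli1 C a o1 o1 * S' i j).
  by move=> i j; rewrite -F !mxE /= mul1r mul0r add0r.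
have F01 : forall i j, 0 = 'i ^+ k * (pauli1 C a o0 o1 * S' i j).
  by move=> i j; rewrite -F !mxE /= !mul0r addr0.
have nzc : 'i ^+ k != 0 :> C by rewrite expf_neq0 // (neq0Ci C).
have [i0 [j0 Hnz]] := pauli_string_nz HS'.
clear E; case: a F FA FB F01 => [[|[|[|[|a]]]] Ha] //= F FA FB F01.
- split; exists k, S'; split=> //; apply/matrixP=> i j;
    by rewrite ?FA ?FB !mxE /= mul1r.
- exfalso; move: (F01 i0 j0); rewrite mxE /= mul1r => /esym/eqP.
  by rewrite mulf_eq0 (negbTE nzc) (negbTE Hnz).
- exfalso; move: (F01 i0 j0); rewrite mxE /= => /esym/eqP.
  by rewrite !mulf_eq0 (negbTE nzc) (negbTE Hnz) oppr_eq0 (negbTE (neq0Ci C)).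
- split.
  + exists k, S'; split=> //; apply/matrixP=> i j; by rewrite FA !mxE /= mul1r.
  + exists (Ordinal (ltn_pmod (k + 2) (isT : (0 < 4)%N))), S'; split=> //.
    apply/matrixP=> i j; rewrite FB !mxE /= iexp_mod exprD sqrCi.
    by rewrite mulrA.
Qed.

Lemma unitary_controlled {C : numClosedFieldType} n (A B : 'M[C]_(2^n)) :
  unitary (controlled A B) -> unitary A /\ unitary B.
Proof. by rewrite /unitary adj_controlled controlled_mul -controlled11 => /controlled_inj. Qed.

Lemma pauli1_0 {C : numClosedFieldType} : pauli1 C ord0 = 1%:M.
Proof. by apply/matrixP=> i j; rewrite !mxE /=; case: eqP. Qed.

Lemma pauli_qtens1 {C : numClosedFieldType} n (P : 'M[C]_(2^n)) :
  pauli_group P -> pauli_group (qtens 1%:M P).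
Proof.
move=> [k [S [HS ->]]]; exists k, (qtens (pauli1 C ord0) S); split.
  by exists ord0, S.
by rewrite qtensZr pauli1_0.
Qed.

Lemma main_gen {C : numClosedFieldType} r : (1 <= r)%N ->
  forall n (A B : 'M[C]_(2^n)), clifford r (controlled A B) -> clifford r A /\ clifford r B.
Proof.
elim: r => [//|r IH] _ n A B; case: r IH => [|r] IH.
  exact: base_pauli.
move=> [UD HP]; have [UA UB] := unitary_controlled UD.
suff H : forall P, pauli_group P ->
   clifford r.+1 (A *m P *m adjmx A) /\ clifford r.+1 (B *m P *m adjmx B).
  by split; split=> // P /H [].
move=> P /pauli_qtens1 /HP.
rewrite qtens1 !controlled_mul adj_controlled controlled_mul.
exact: IH.
Qed.

Theorem mainTheorem1 (C : numClosedFieldType) (n r : nat)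
  (A B : 'M[C]_(2 ^ n)) :
  (1 <= n)%N -> (1 <= r)%N -> unitary A -> unitary B ->
  clifford r (controlled A B) ->
  clifford r A /\ clifford r B.
Proof. by move=> _ Hr _ _; apply: main_gen. Qed.
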